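(* Let $\{f(\mathbf z;\boldsymbol\theta):\boldsymbol\theta\in\Theta\}$, $\Theta\subset\mathbb{R}^p$, be a family of probability mass or density functions on $\mathcal Z\subset\mathbb{R}^q$ of the form $f(\mathbf z;\boldsymbol\theta)=\int_\Omega\varphi(\mathbf v,\mathbf z,\boldsymbol\theta)\,\omega(\mathbf v)\,d\mathbf v$ with $\Omega\subset\mathbb{R}^d$, $\varphi:\Omega\times\mathcal Z\times\Theta\to\mathbb{R}$ and weight function $\omega:\Omega\to\mathbb{R}_+$, and let $\mathbf z_1,\dots,\mathbf z_n$ be i.i.d. from $f(\cdot;\boldsymbol\theta_0)$. For $r\in\mathbb N$ let $\tilde f_r(\mathbf z;\boldsymbol\theta)=\sum_{j=1}^r w_{j,r}\varphi(\mathbf v_{j,r},\mathbf z,\boldsymbol\theta)$ with (possibly random) nodes $\mathbf v_{j,r}\in\Omega$ and weights $w_{j,r}$ not depending on $\mathbf z$. Let $R:\mathbb N\to\mathbb N$, $\tilde L_n(\boldsymbol\theta)=\frac1n\sum_{i=1}^n\log\tilde f_{R(n)}(\mathbf z_i;\boldsymbol\theta)$ and $\hat{\boldsymbol\theta}_{MAL}=\arg\max_{\boldsymbol\theta\in\Theta}\tilde L_n(\boldsymbol\theta)$. Let $\bar{\mathcal E}_0(r)=\sup_{\mathbf z\in\mathcal Z,\boldsymbol\theta\in\Theta}|f(\mathbf z;\boldsymbol\theta)-\tilde f_r(\mathbf z;\boldsymbol\theta)|$. Assume: there is a continuous function $Q_0:\Theta\to\mathbb{R}$ uniquely maximized at $\boldsymbol\theta_0\in\Theta$,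 $\Theta$ is compact, and $L_n(\boldsymbol\theta)=\frac1n\sum_{i=1}^n\log f(\mathbf z_i;\boldsymbol\theta)$ converges uniformly in probability to $Q_0$ on $\Theta$; and (i) there is $\bar\delta>0$ with $f(\mathbf z;\boldsymbol\theta)>\bar\delta$ for all $\mathbf z\in\mathcal Z,\boldsymbol\theta\in\Theta$; (ii) $\varphi(\mathbf v,\mathbf z,\boldsymbol\theta)$ is continuous in $\boldsymbol\theta\in\Theta$; (iii) $\operatorname{plim}_{r\to\infty}\bar{\mathcal E}_0(r)=0$; (iv) $R(n)$ is monotonically increasing in $n$ and $\lim_{n\to\infty}R(n)=\infty$. Then $\hat{\boldsymbol\theta}_{MAL}\to\boldsymbol\theta_0$ in probability. *)

(* Defs.v *)
From HB Require Import structures.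
From mathcomp Require Import all_boot all_order all_algebra.
From mathcomp Require Import all_classical all_reals all_analysis.
Set Implicit Arguments. Unset Strict Implicit. Unset Printing Implicit Defensive.
Import Order.TTheory GRing.Theory Num.Theory.
Import numFieldNormedType.Exports.
Local Open Scope classical_set_scope.
Local Open Scope ring_scope.

(* "The probability of the events E n tends to 1", in the outer-probability
   sense (no measurability of E n required): for every delta > 0, eventually
   E n contains a measurable set of probability >= 1 - delta.  Equivalently the
   outer probability of the complement of E n tends to 0. *)
Definition prob_to_one {d} {T : measurableType d} {R : realType}
  (P : probability T R) (E : nat -> set T) : Prop :=
  forall delta : R, 0 < delta ->
    \forall n \near \oo, exists A : set T,
      [/\ measurable A, A `<=` E n & ((1 - delta)%:E <= P A)%E].

Definition mutually_independent {d} {T : measurableType d} {R : realType}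
  {d'} {U : measurableType d'} (P : probability T R) (X : nat -> T -> U) : Prop :=
  forall (s : seq nat) (A : nat -> set U), uniq s ->
    (forall i, measurable (A i)) ->
    P (\big[setI/setT]_(i <- s) (X i @^-1` A i)) =
    (\prod_(i <- s) P (X i @^-1` A i))%E.

(* Monte-Carlo / quadrature approximation
   f~_r(z; theta) = sum_{j=1}^r w_{j,r} phi(v_{j,r}, z, theta)
   (indices j = 0, ..., r-1 here), at the sample point om. *)
Definition ftilde {R : realType} {T V Z Th : Type}
  (phi : V -> Z -> Th -> R) (v : nat -> nat -> T -> V) (w : nat -> nat -> T -> R)
  (r : nat) (om : T) (z : Z) (th : Th) : R :=
  \sum_(j < r) w j r om * phi (v j r om) z th.

Definition avg_loglik {R : realType} {T Z Th : Type}
  (g : Z -> Th -> R) (z : nat -> T -> Z) (n : nat) (om : T) (th : Th) : R :=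
  n%:R^-1 * \sum_(i < n) ln (g (z i om) th).

Definition sup_err {R : realType} {T Z Th : Type} (Zs : set Z) (Ths : set Th)
  (f : Z -> Th -> R) (ft : nat -> T -> Z -> Th -> R) (r : nat) (om : T) : \bar R :=
  ereal_sup [set x | exists z th, [/\ Zs z, Ths th &
                       x = (`|f z th - ft r om z th|)%:E]].

(* Main.v *)
Require Import Defs.
From HB Require Import structures.
From mathcomp Require Import all_boot all_order all_algebra.
From mathcomp Require Import all_classical all_reals all_analysis.
From mathcomp Require Import lra ring.
Import Order.TTheory GRing.Theory Num.Theory.
Import numFieldNormedType.Exports.
Local Open Scope classical_set_scope.
Local Open Scope ring_scope.

Lemma ln_sub_le {R : realType} (a b : R) : 0 < a -> 0 < b -> ln a - ln b <= (a - b) / b.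
Proof.
move=> a0 b0.
have e : a = b * (1 + (a - b) / b).
  by rewrite mulrDr mulr1 mulrCA divff ?gt_eqF // mulr1 addrC subrK.
have h : -1 < (a - b) / b.
  have : 0 < a / b by rewrite divr_gt0.
  rewrite mulrBl divff ?gt_eqF //; lra.
rewrite {1}e.
rewrite lnM ?posrE //; last by move: h; lra.
by rewrite addrAC subrr add0r le_ln1Dx.
Qed.

Lemma ln_dist {R : realType} (a b m : R) : 0 < m -> m <= a -> m <= b ->
  `|ln a - ln b| <= `|a - b| / m.
Proof.
move=> m0 ma mb.
have a0 : 0 < a by apply: lt_le_trans ma.
have b0 : 0 < b by apply: lt_le_trans mb.
have key : forall x y : R, 0 < x -> 0 < y -> m <= y -> ln x - ln y <= `|x - y| / m.
  move=> x y x0 y0 my; have := ln_sub_le x y x0 y0; move/le_trans; apply.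
  case: (lerP 0 (x - y)) => h.
    rewrite ger0_norm //; apply: ler_pM => //; first by rewrite invr_ge0 ltW.
    by rewrite lef_pV2 ?posrE.
  apply: le_trans (_ : 0 <= _); first by rewrite pmulr_lle0 ?invr_gt0 // ltW.
  by rewrite divr_ge0 // ltW.
case: (lerP 0 (ln a - ln b)) => h.
  by rewrite ger0_norm //; apply: key.
rewrite ltr0_norm // opprB distrC; exact: key.
Qed.

Lemma avg_dist {R : realType} n (a b : 'I_n -> R) c : 0 <= c ->
  (forall i, `|a i - b i| <= c) ->
  `|n%:R^-1 * \sum_(i < n) a i - n%:R^-1 * \sum_(i < n) b i| <= c.
Proof.
move=> c0 h; case: n a b h => [|n] a b h.
  by rewrite !big_ord0 mulr0 subrr normr0.
rewrite -mulrBr -sumrB normrM ger0_norm ?invr_ge0 //.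
rewrite ler_pdivrMl ?ltr0n //.
apply: le_trans (ler_norm_sum _ _ _) _.
apply: (@le_trans _ _ (\sum_(i < n.+1) c)); first by apply: ler_sum => i _; exact: h.
by rewrite sumr_const card_ord mulr_natl.
Qed.

Lemma prob_inter {d} {T : measurableType d} {R : realType} (P : probability T R)
  {A B : set T} {a b : R} : measurable A -> measurable B ->
  ((1 - a)%:E <= P A)%E -> ((1 - b)%:E <= P B)%E -> ((1 - (a + b))%:E <= P (A `&` B))%E.
Proof.
move=> mA mB hA hB.
have fin X : measurable X -> P X = (fine (P X))%:E.
  by move=> mX; rewrite fineK // fin_num_measure.
have mCA : measurable (~` A) by exact: measurableC.
have mCB : measurable (~` B) by exact: measurableC.
have mI : measurable (A `&` B) by exact: measurableI.
have hU : (P (~` (A `&` B)) <= P (~` A) + P (~` B))%E.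
  by rewrite setCI; exact: measureU2.
rewrite probability_setC // (probability_setC _ mA) (probability_setC _ mB) in hU.
move: hA hB hU; rewrite (fin _ mA) (fin _ mB) (fin _ mI) -!EFinB -EFinD !lee_fin.
lra.
Qed.

Lemma gap {R : realType} {p : nat} {Th : set 'rV[R]_p} {Q0 : 'rV[R]_p -> R} {theta0} {eps : R} :
  0 < eps -> {within Th, continuous Q0} ->
  (forall th, Th th -> th != theta0 -> Q0 th < Q0 theta0) -> compact Th ->
  exists2 eta, 0 < eta & forall th, Th th -> ~ ball theta0 eps th -> Q0 th + eta <= Q0 theta0.
Proof.
move=> e0 cQ umax cTh.
pose K := Th `&` ~` ball theta0 eps.
have [[c Kc]|K0] := pselect (K !=set0); last first.
  exists 1 => // th Tth nb; exfalso; apply: K0; by exists th.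
have cK : compact K by apply: compact_closedI => //; apply: open_closedC; exact: ball_open.
have cQK : {within K, continuous Q0} by apply: continuous_subspaceW cQ => x [].
have [m mK mmax] := EVT_max_rV (ex_intro _ c Kc) cK cQK.
move: mK; rewrite inE => -[Tm nbm].
have mne : m != theta0.
  by apply/eqP => em; apply: nbm; rewrite em; exact: ballxx.
exists (Q0 theta0 - Q0 m); first by rewrite subr_gt0 umax.
move=> th Tth nb.
have : Q0 th <= Q0 m by apply: mmax; rewrite inE.
lra.
Qed.

Lemma as_all {d} {T : measurableType d} {R : realType} (P : probability T R)
  (S : nat -> set T) : (forall i, measurable (S i)) -> (forall i, P (S i) = 1%E) ->
  exists A, [/\ measurable A, P A = 1%E & forall i, A `<=` S i].
Proof.
move=> mS PS.
have neg i : negligible P (~` S i).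
  apply/negligibleP; first exact: measurableC.
  have h := probability_setC P (mS i); rewrite PS subee // in h; exact: h.
have [B [mB PB0 sB]] := negligible_bigcup neg.
exists (~` B); split.
- exact: measurableC.
- have h := probability_setC P mB; rewrite h.
  have -> : P B = 0%E by exact: PB0.
  by rewrite sube0.
- move=> i x nBx; apply: contrapT => nSx; apply: nBx; apply: sB; by exists i.
Qed.
Theorem corollary10
  (R : realType) (p q dd : nat)
  (* the probability space carrying the data and the (random) nodes/weights *)
  (dT : measure_display) (T : measurableType dT) (P : probability T R)
  (* parameter space Theta in R^p, sample space Z in R^q, domain Omega in R^d *)
  (Th : set 'rV[R]_p) (Zs : set (q.-tuple R)) (Om : set (dd.-tuple R))
  (* reference measure on R^q (Lebesgue or counting): f(.;theta) is a density/pmf w.r.t. it *)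
  (nu : {measure set (q.-tuple R) -> \bar R})
  (* measure dv on R^d of the integral representation *)
  (mu : {measure set (dd.-tuple R) -> \bar R})
  (phi : dd.-tuple R -> q.-tuple R -> 'rV[R]_p -> R)
  (wt : dd.-tuple R -> R)
  (f : q.-tuple R -> 'rV[R]_p -> R)
  (theta0 : 'rV[R]_p)
  (z : nat -> T -> q.-tuple R)
  (v : nat -> nat -> T -> dd.-tuple R) (w : nat -> nat -> T -> R)
  (Rn : nat -> nat)
  (Q0 : 'rV[R]_p -> R)
  (theta_hat : nat -> T -> 'rV[R]_p) :
  (* weight function omega : Omega -> R_+ *)
  (forall x, Om x -> 0 <= wt x) ->
  (* integral representation f(z;theta) = int_Omega phi(v,z,theta) omega(v) dv *)
  (forall zz th, Zs zz -> Th th ->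
     (\int[mu]_(x in Om) (phi x zz th * wt x)%:E)%E = (f zz th)%:E) ->
  (* {f(.;theta)} is a family of probability mass / density functions on Z *)
  measurable Zs ->
  (forall zz th, Zs zz -> Th th -> 0 <= f zz th) ->
  (forall th, Th th -> (\int[nu]_(zz in Zs) (f zz th)%:E)%E = 1%E) ->
  (* z_1, z_2, ... i.i.d. from f(.;theta0) *)
  (forall i, measurable_fun setT (z i)) ->
  mutually_independent P z ->
  (forall i (A : set (q.-tuple R)), measurable A ->
     P (z i @^-1` A) = (\int[nu]_(zz in A `&` Zs) (f zz theta0)%:E)%E) ->
  (* nodes lie in Omega *)
  (forall j r om, Om (v j r om)) ->
  (* theta_hat_MAL maximizes the approximate log-likelihood over Theta *)
  (forall n om, Th (theta_hat n om) /\
     forall th, Th th ->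
       avg_loglik (ftilde phi v w (Rn n) om) z n om th
       <= avg_loglik (ftilde phi v w (Rn n) om) z n om (theta_hat n om)) ->
  (* Q0 continuous, uniquely maximized at theta0 in Theta; Theta compact *)
  Th theta0 ->
  {within Th, continuous Q0} ->
  (forall th, Th th -> th != theta0 -> Q0 th < Q0 theta0) ->
  compact Th ->
  (* L_n -> Q0 uniformly in probability on Theta *)
  (forall eps : R, 0 < eps ->
     prob_to_one P (fun n => [set om | forall th, Th th ->
        `|avg_loglik f z n om th - Q0 th| <= eps])) ->
  (* (i) f bounded below by delta > 0 *)
  (exists2 delta : R, 0 < delta &
     forall zz th, Zs zz -> Th th -> delta < f zz th) ->
  (* (ii) phi continuous in theta on Theta *)
  (forall x zz, Om x -> Zs zz -> {within Th, continuous (phi x zz)}) ->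
  (* (iii) plim_{r -> oo} bar E_0(r) = 0 *)
  (forall eps : R, 0 < eps ->
     prob_to_one P (fun r => [set om |
        (sup_err Zs Th f (ftilde phi v w) r om <= eps%:E)%E])) ->
  (* (iv) R(n) monotonically increasing with R(n) -> oo *)
  {homo Rn : m n / (m <= n)%N} ->
  (forall M, exists N, forall n, (N <= n)%N -> (M <= Rn n)%N) ->
  (* conclusion: theta_hat_MAL -> theta0 in probability *)
  forall eps : R, 0 < eps ->
    prob_to_one P (fun n => [set om | `|theta_hat n om - theta0| <= eps]).
Proof.
move=> wt0 frep mZs f0 fint zmeas indep zlaw vOm thmax Tth0 cQ umax cTh Lconv
  [dl dl0 fdl] phicont err Rmono Rinf eps e0.
have [eta eta0 gapH] := gap e0 cQ umax cTh.
have [A3 [mA3 PA3 sA3]] : exists A, [/\ measurable A, P A = 1%E &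
    forall i, A `<=` z i @^-1` Zs].
  apply: as_all => i.
    by have := zmeas i measurableT _ mZs; rewrite setTI.
  by rewrite zlaw // setIid fint.
move=> de de0.
pose e1 := eta / 4.
pose kap := Num.min (1/2) (eta / 16).
pose e2 := dl * kap.
have kap0 : 0 < kap by rewrite lt_min; apply/andP; split => //; rewrite divr_gt0.
have kap1 : kap <= 1/2 by rewrite ge_min lexx.
have kap2 : kap <= eta / 16 by rewrite ge_min lexx orbT.
have e10 : 0 < e1 by rewrite divr_gt0.
have e20 : 0 < e2 by rewrite mulr_gt0.
have de20 : 0 < de / 2 by rewrite divr_gt0.
case: (Lconv e1 e10 (de / 2) de20) => N1 _ HN1.
case: (err e2 e20 (de / 2) de20) => N2 _ HN2.
have [N3 HN3] := Rinf N2.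
exists (maxn N1 N3) => // n /=; rewrite geq_max => /andP[n1 n3].
have [A1 [mA1 sA1 PA1]] := HN1 n n1.
have [A2 [mA2 sA2 PA2]] := HN2 (Rn n) (HN3 n n3).
exists (A1 `&` A2 `&` A3); split.
- by apply: measurableI => //; exact: measurableI.
- move=> om [[A1om A2om] A3om].
  have Lb := sA1 om A1om.
  have Eb := sA2 om A2om.
  have Zb i : Zs (z i om) := sA3 i om A3om.
  set ft := ftilde phi v w (Rn n) om.
  have pw zz th : Zs zz -> Th th -> `|f zz th - ft zz th| <= e2.
    move=> Zz Tth; rewrite -lee_fin; apply: le_trans Eb; apply: ereal_sup_ubound.
    by exists zz, th; split.
  have e2dl : e2 <= dl / 2.
    rewrite /e2; move: kap1 dl0; nra.
  have e2eta : e2 <= dl * (eta / 16) by rewrite /e2 ler_pM2l.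
  clearbody e2.
  have lnb zz th : Zs zz -> Th th -> `|ln (ft zz th) - ln (f zz th)| <= eta / 8.
    move=> Zz Tth; have fz := fdl zz th Zz Tth; have := pw zz th Zz Tth.
    rewrite ler_norml => /andP[hl hr].
    have dl2 : 0 < dl / 2 by rewrite divr_gt0.
    have hm1 : dl / 2 <= ft zz th by lra.
    have hm2 : dl / 2 <= f zz th by lra.
    apply: (le_trans (ln_dist _ _ _ dl2 hm1 hm2)).
    rewrite ler_pdivrMr // distrC.
    apply: le_trans (pw zz th Zz Tth) _; apply: le_trans e2eta _.
    rewrite le_eqVlt; apply/orP; left; by apply/eqP; field.
  have dist t : Th t -> `|avg_loglik ft z n om t - avg_loglik f z n om t| <= eta / 8.
    move=> Tt; rewrite /avg_loglik; apply: avg_dist => [|i]; last exact: lnb.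
    by rewrite divr_ge0 // ltW.
  have [Tth hmax] := thmax n om.
  have := Lb _ Tth; have := Lb _ Tth0; have := dist _ Tth; have := dist _ Tth0.
  have := hmax _ Tth0; fold ft.
  rewrite !ler_norml => h0 /andP[h1 h2] /andP[h3 h4] /andP[h5 h6] /andP[h7 h8].
  have [b|nb] := pselect (ball theta0 eps (theta_hat n om)).
    by rewrite -ball_normE /= distrC in b; exact: ltW.
  have := gapH _ Tth nb; rewrite /e1 in h5 h6 h7 h8; lra.
- have h12 := prob_inter P mA1 mA2 PA1 PA2.
  have h3 : ((1 - 0)%:E <= P A3)%E by rewrite PA3 subr0.
  have h := prob_inter P (measurableI _ _ mA1 mA2) mA3 h12 h3.
  by move: h; rewrite addr0 -splitr.
Qed.
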